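(* Let $F\in\mathbf F$ satisfy either (i) $\mathbf{NA^r}$, or (ii) both $\mathbf{NA^s}$ and $\mathbf{EF}$. Then $F$ satisfies $\mathbf{KP}$.
   Context: Fix $T\in\mathbb N$, $\mathbb T=\{0,\dots,T\}$, $d\ge1$, a complete probability space $(\Omega,\mathcal F,\mathbb P)$ and a filtration $\mathbb H=(\mathcal H_t)_{t\in\mathbb T}$ with $\mathcal H_T\subset\mathcal F$ (no other relation between $\mathbb H$ and the other processes is assumed). Equalities and inequalities between random variables are understood $\mathbb P$-a.s. $\mathbb M^d$ denotes the real $d\times d$ matrices. For $E\subset\mathbb M^d$ (or $E\subset\mathbb R^d$) and a $\sigma$-algebra $\mathcal G\subset\mathcal F$, $L^0(E;\mathcal G)$ is the set of $E$-valued $\mathcal G$-measurable random variables. A closed convex cone $\mathcal A\subset\mathbb M^d$ is fixed; $\mathbb L^0(\mathcal A;\mathbb H)$ denotes the set of $\mathcal A$-valued $\mathbb H$-adapted processes $(\eta_t)_{t\in\mathbb T}$. $\mathbb F$ is the set of continuous maps $f:\mathbb M^d\to\mathbb R^d$ such that (HF1) $f(\lambda a)=\lambda f(a)$ for all $\lambda\ge0$, $a\in\mathbb M^d$; (HF2) $f(\lambda a+\beta a')-(\lambda f(a)+\beta f(a'))\in\mathbb R^d_+$ for all $\lambda,\beta\ge0$, $a,a'\in\mathcal A$. $\mathbf F$ is the set of sequences $F=(F_t)_{t\in\mathbb T}$ of $\mathcal F$-measurable random maps $F_t:\Omega\times\mathbb M^d\to\mathbb R^d$ with $F_t(\omega,\cdot)\in\mathbb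 F$ for a.e. $\omega$ (no adaptedness to $\mathbb H$ is assumed); for a random matrix $\eta$, $F_t(\eta)(\omega)=F_t(\omega,\eta(\omega))$. $N_t(F)=\{F_t(\eta):\eta\in L^0(\mathcal A;\mathcal H_t)\}$, $N^0_t(F)=N_t(F)\cap(-N_t(F))$. For a process $\xi=(\xi_t)_{t\in\mathbb T}$, ''$\xi\in N(F)$'' means $\xi_t\in N_t(F)$ for all $t$, and ''$\xi\in N^0(F)$'' means $\xi_t\in N^0_t(F)$ for all $t$. $V_t(\xi)=\sum_{s=0}^t\xi_s$ and $A_t(F)=\{V_t(\xi)-r:\ \xi\in N(F),\ r\in L^0(\mathbb R^d_+;\mathcal F)\}$. Condition $\mathbf{KP}$: for all $\xi,\tilde\xi\in N(F)$, $V_T(\xi)+V_T(\tilde\xi)\in L^0(\mathbb R^d_+;\mathcal F)$ implies $\xi\in N^0(F)$ and $V_T(\xi)+V_T(\tilde\xi)=0$. Condition $\mathbf{NA^w}$ (for an element $G\in\mathbf F$): $A_T(G)\cap L^0(\mathbb R^d_+;\mathcal F)=\{0\}$. Condition $\mathbf{NA^s}$: $A_t(F)\cap\big(-N_t(F)+L^0(\mathbb R^d_+;\mathcal F)\big)\subset N^0_t(F)$ for all $t\in\mathbb T$. Condition $\mathbf{EF}$: $N^0_t(F)=\{0\}$ for all $t\in\mathbb T$. Condition $\mathbf{NA^r}$: there exists $G\in\mathbf F$ such that for all $\eta\in\mathbb L^0(\mathcal A;\mathbb H)$, $t\in\mathbb T$ and $i\le d$: (1) $G^i_t(\eta_t)\ge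 F^i_t(\eta_t)$; (2) if $F_t(\eta_t)\notin N^0_t(F)$ then the event $\{\exists k\le d: G^k_t(\eta_t)>F^k_t(\eta_t)\}$ has positive probability; (3) $\mathbf{NA^w}$ holds for $G$. *)

(* Defs.v *)
From HB Require Import structures.
From mathcomp Require Import all_boot all_order all_algebra.
From mathcomp Require Import all_classical all_reals all_analysis.
Set Implicit Arguments. Unset Strict Implicit. Unset Printing Implicit Defensive.
Import Order.TTheory GRing.Theory Num.Theory.
Import numFieldNormedType.Exports.
Local Open Scope classical_set_scope.
Local Open Scope ring_scope.

Section Defs.
Context (R : realType) (d : measure_display) (Omega : measurableType d)
  (P : probability Omega R) (n : nat).

Notation vec := 'rV[R]_n.
Notation mat := 'M[R]_n.

Definition closed_convex_cone (A : set mat) : Prop :=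
  closed A /\ A 0 /\
  (forall (l : R) a, 0 <= l -> A a -> A (l *: a)) /\
  (forall a b, A a -> A b -> A (a + b)).

Definition vec_nonneg (v : vec) : Prop := forall i, 0 <= v 0 i.

Definition in_FF (A : set mat) (f : mat -> vec) : Prop :=
  continuous f /\
  (forall (l : R) a, 0 <= l -> f (l *: a) = l *: f a) /\
  (forall (l b : R) a a', 0 <= l -> 0 <= b -> A a -> A a' ->
     vec_nonneg (f (l *: a + b *: a') - (l *: f a + b *: f a'))).

Definition meas_wrt (G : set (set Omega)) (X : Omega -> R) : Prop :=
  forall B : set R, measurable B -> G (X @^-1` B).

Definition mat_meas (G : set (set Omega)) (X : Omega -> mat) : Prop :=
  forall i j, meas_wrt G (fun w => X w i j).
Definition vec_meas (G : set (set Omega)) (X : Omega -> vec) : Prop :=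
  forall i, meas_wrt G (fun w => X w 0 i).

Definition ase {T} (X Y : Omega -> T) : Prop := {ae P, forall w, X w = Y w}.

(* X belongs to L^0(E; G) (random variables are identified up to a.s. equality) *)
Definition inL0m (E : set mat) (G : set (set Omega)) (X : Omega -> mat) : Prop :=
  exists Y, mat_meas G Y /\ (forall w, E (Y w)) /\ ase X Y.
Definition inL0v (E : set vec) (G : set (set Omega)) (X : Omega -> vec) : Prop :=
  exists Y, vec_meas G Y /\ (forall w, E (Y w)) /\ ase X Y.

Definition L0plus (X : Omega -> vec) : Prop :=
  inL0v vec_nonneg measurable X.

Definition filtration (T : nat) (H : nat -> set (set Omega)) : Prop :=
  (forall t, (t <= T)%N -> sigma_algebra setT (H t)) /\
  (forall s t, (s <= t)%N -> (t <= T)%N -> H s `<=` H t) /\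
  H T `<=` measurable.

Definition random_map := nat -> Omega -> mat -> vec.

Definition in_bfF (T : nat) (A : set mat) (F : random_map) : Prop :=
  forall t, (t <= T)%N ->
    (forall a i, meas_wrt measurable (fun w => F t w a 0 i)) /\
    {ae P, forall w, in_FF A (F t w)}.

Definition app (F : random_map) (t : nat) (eta : Omega -> mat) : Omega -> vec :=
  fun w => F t w (eta w).

Section Cond.
Context (T : nat) (A : set mat) (H : nat -> set (set Omega)).

Definition inN (F : random_map) (t : nat) (X : Omega -> vec) : Prop :=
  exists eta, inL0m A (H t) eta /\ ase X (app F t eta).

Definition inN0 (F : random_map) (t : nat) (X : Omega -> vec) : Prop :=
  inN F t X /\ inN F t (fun w => - X w).

Definition procN (F : random_map) (xi : nat -> Omega -> vec) : Prop :=
  forall t, (t <= T)%N -> inN F t (xi t).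
Definition procN0 (F : random_map) (xi : nat -> Omega -> vec) : Prop :=
  forall t, (t <= T)%N -> inN0 F t (xi t).

Definition V (xi : nat -> Omega -> vec) (t : nat) : Omega -> vec :=
  fun w => \sum_(s < t.+1) xi s w.

Definition inAt (F : random_map) (t : nat) (X : Omega -> vec) : Prop :=
  exists xi r, procN F xi /\ L0plus r /\ ase X (fun w => V xi t w - r w).

Definition KP (F : random_map) : Prop :=
  forall xi xi', procN F xi -> procN F xi' ->
    L0plus (fun w => V xi T w + V xi' T w) ->
    procN0 F xi /\ ase (fun w => V xi T w + V xi' T w) (fun=> 0).

Definition NAw (G : random_map) : Prop :=
  forall X, (inAt G T X /\ L0plus X) <-> ase X (fun=> 0).

Definition NAs (F : random_map) : Prop :=
  forall t, (t <= T)%N -> forall X,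
    inAt F t X ->
    (exists xi r, inN F t xi /\ L0plus r /\ ase X (fun w => - xi w + r w)) ->
    inN0 F t X.

Definition EF (F : random_map) : Prop :=
  forall t, (t <= T)%N -> forall X, inN0 F t X <-> ase X (fun=> 0).

Definition adaptedA (eta : nat -> Omega -> mat) : Prop :=
  forall t, (t <= T)%N -> inL0m A (H t) (eta t).

Definition NAr (F : random_map) : Prop :=
  exists G, in_bfF T A G /\
    (forall eta, adaptedA eta -> forall t, (t <= T)%N ->
       (forall i, {ae P, forall w, F t w (eta t w) 0 i <= G t w (eta t w) 0 i}) /\
       (~ inN0 F t (app F t (eta t)) ->
          (0%:E < P [set w | exists k, (F t w (eta t w) ord0 k < G t w (eta t w) ord0 k)%R])%E)) /\
    NAw G.
End Cond.
End Defs.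

(* Main.v *)
Require Import Defs.
From HB Require Import structures.
From mathcomp Require Import all_boot all_order all_algebra.
From mathcomp Require Import all_classical all_reals all_analysis.
From mathcomp Require Import ring lra measurable_realfun.
Import Order.TTheory GRing.Theory Num.Theory.
Import numFieldNormedType.Exports.
Local Open Scope classical_set_scope.
Local Open Scope ring_scope.
Set Implicit Arguments. Unset Strict Implicit. Unset Printing Implicit Defensive.
Section Approx.
Context (R : realType) (n : nat).

Definition qm (m : nat) : 'M[R]_n :=
  map_mx ratr (odflt 0 (unpickle m : option 'M[rat]_n)).

Lemma qm_dense (M : 'M[R]_n) {e : R} : 0 < e ->
  exists m, forall i j, `|qm m i j - M i j| < e.
Proof.
move=> e0.
have h : forall ij : 'I_n * 'I_n, exists q : rat,
    ratr q \in `](M ij.1 ij.2 - e), (M ij.1 ij.2 + e)[.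
  move=> ij; apply: rat_in_itvoo.
  by rewrite ltrBlDr -addrA ltrDl addr_gt0.
have [g hg] := choice h.
exists (pickle (\matrix_(i, j) g (i, j) : 'M[rat]_n)) => i j.
rewrite /qm pickleK /= mxE mxE.
have := hg (i, j); rewrite in_itv /= => /andP[h1 h2].
rewrite ltr_norml; apply/andP; split; lra.
Qed.

Definition closeb (e : R) (x : 'M[R]_n) (m : nat) : bool :=
  [forall ij : 'I_n * 'I_n, `|qm m ij.1 ij.2 - x ij.1 ij.2| < e].

Definition epsk (k : nat) : R := k.+1%:R^-1.

Lemma epsk_gt0 k : 0 < epsk k.
Proof. by rewrite invr_gt0 ltr0n. Qed.

Lemma closeb_ex k x : exists m, closeb (epsk k) x m.
Proof.
have [m hm] := qm_dense x (epsk_gt0 k).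
by exists m; apply/forallP => -[i j]; exact: hm.
Qed.

Definition mk k x : nat := ex_minn (closeb_ex k x).
Definition approx k x : 'M[R]_n := qm (mk k x).

Lemma mkP k x : closeb (epsk k) x (mk k x).
Proof. by rewrite /mk; case: ex_minnP. Qed.

Lemma mkE k x m : (mk k x = m) <->
  (closeb (epsk k) x m /\ forall j, (j < m)%N -> ~~ closeb (epsk k) x j).
Proof.
rewrite /mk; case: ex_minnP => m0 h0 hmin; split.
  move=> <-; split => // j jm; apply/negP => cj.
  by have := hmin _ cj; rewrite leqNgt jm.
move=> [cm hm]; apply/eqP; rewrite eqn_leq hmin // leqNgt.
by apply/negP => /hm; rewrite h0.
Qed.

Lemma approx_cvg x : approx^~ x @ \oo --> x.
Proof.
apply/cvg_ballP => e e0.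
have [N hN] : exists N : nat, epsk N < e.
  exists (Num.truncn e^-1); rewrite /epsk -[X in _ < X](invrK e).
  rewrite ltf_pV2 ?posrE ?ltr0n ?invr_gt0 //; exact: truncnS_gt.
exists N => // k /= Nk; split => // i j.
have := forallP (mkP k x) (i, j) => /= h.
rewrite /ball /= distrC (lt_le_trans h) // (le_trans _ (ltW hN)) //.
rewrite /epsk lef_pV2 ?posrE ?ltr0n // ler_nat; exact: Nk.
Qed.
End Approx.
Arguments epsk {R} k.
Arguments qm {R n} m.
Arguments epsk_gt0 {R} k.

Section Carath.
Context (R : realType) (d : measure_display) (Omega : measurableType d) (n : nat).
Variable f : Omega -> 'M[R]_n -> 'rV[R]_n.
Hypothesis hf : forall a i, measurable_fun setT (fun w => f w a 0 i).
Variable eta : Omega -> 'M[R]_n.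
Hypothesis he : forall i j, measurable_fun setT (fun w => eta w i j).

Lemma meas_close m k : measurable [set w | closeb (epsk k) (eta w) m].
Proof.
have -> : [set w | closeb (epsk k) (eta w) m] =
  \bigcap_(ij in setT) ((fun w => eta w ij.1 ij.2) @^-1`
      ball (qm m ij.1 ij.2) (epsk k)).
  apply/seteqP; split => w /=.
    by move=> /forallP h ij _; have := h ij; rewrite /ball /=.
  by move=> h; apply/forallP => ij; have := h ij I; rewrite /ball /=.
apply: fin_bigcap_measurable; first exact: finite_finset.
move=> [i j] _; rewrite -(setTI (_ @^-1` _)).
exact: (he i j measurableT (measurable_ball _ _)).
Qed.

Lemma meas_mk m k : measurable [set w | mk k (eta w) = m].
Proof.
have -> : [set w | mk k (eta w) = m] =
  [set w | closeb (epsk k) (eta w) m] `&`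
  \bigcap_(j in `I_m) ~` [set w | closeb (epsk k) (eta w) j].
  apply/seteqP; split => w /=.
    move=> /mkE [h1 h2]; split => // j /= jm; apply/negP; exact: h2.
  move=> [h1 h2]; apply/mkE; split => // j jm; apply/negP; exact: h2.
apply: measurableI; first exact: meas_close.
apply: fin_bigcap_measurable; first exact: finite_II.
by move=> j _; apply: measurableC; exact: meas_close.
Qed.

Lemma meas_approx k i : measurable_fun setT (fun w => f w (approx k (eta w)) 0 i).
Proof.
move=> _ B mB; rewrite setTI.
have -> : (fun w => f w (approx k (eta w)) 0 i) @^-1` B =
  \bigcup_m ([set w | mk k (eta w) = m] `&` ((fun w => f w (qm m) 0 i) @^-1` B)).
  apply/seteqP; split => w /=.
    by move=> h; exists (mk k (eta w)) => //.
  by move=> [m _ [<- h]].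
apply: bigcupT_measurable => m; apply: measurableI; first exact: meas_mk.
rewrite -(setTI (_ @^-1` _)); exact: (hf (qm m) i measurableT mB).
Qed.

Lemma entry_cvg (u : nat -> 'rV[R]_n) (v : 'rV[R]_n) i :
  u @ \oo --> v -> (fun k => u k 0 i) @ \oo --> v 0 i.
Proof.
move=> /cvg_ballP h; apply/cvg_ballP => e e0.
by apply: filterS (h e e0) => k [_ hk]; exact: hk.
Qed.

Lemma carath (N : set Omega) (hc : forall w, ~ N w -> continuous (f w)) i :
  measurable (~` N) -> measurable_fun (~` N) (fun w => f w (eta w) 0 i).
Proof.
move=> mN; apply: (@measurable_fun_cvg d Omega R (~` N)
  (fun k w => f w (approx k (eta w)) 0 i) (fun w => f w (eta w) 0 i)).
  move=> k; apply: measurable_funS (meas_approx k i) => //.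
move=> w /= nw.
have h1 := @approx_cvg R n (eta w).
have h2 : f w @ eta w --> f w (eta w) by apply: hc.
have h3 := cvg_comp _ _ h1 h2.
apply: (entry_cvg (u := fun k => f w (approx k (eta w)))); exact: h3.
Qed.
End Carath.

Section Main.
Context (R : realType) (d : measure_display) (Omega : measurableType d)
  (P : probability Omega R) (n : nat).
Local Notation vec := 'rV[R]_n.
Local Notation mat := 'M[R]_n.
Local Notation ase := (ase P).

Lemma ase_refl {U} (X : Omega -> U) : ase X X.
Proof. by apply: aeW. Qed.
Lemma ase_sym {U} (X Y : Omega -> U) : ase X Y -> ase Y X.
Proof. by apply: filterS => w ->. Qed.
Lemma ase_trans {U} (X Y Z : Omega -> U) : ase X Y -> ase Y Z -> ase X Z.
Proof. by move=> h1 h2; apply: filterS2 h1 h2 => w -> ->. Qed.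
Lemma ase_pw {U} (X Y : Omega -> U) : (forall w, X w = Y w) -> ase X Y.
Proof. by move=> h; apply: aeW. Qed.

Lemma ae_conj (Q1 Q2 : Omega -> Prop) :
  {ae P, forall w, Q1 w} -> {ae P, forall w, Q2 w} -> {ae P, forall w, Q1 w /\ Q2 w}.
Proof. by move=> h1 h2; apply: filterS2 h1 h2 => w a b; split. Qed.

Lemma ae_nat (Q : nat -> Omega -> Prop) m :
  (forall s, (s < m)%N -> {ae P, forall w, Q s w}) ->
  {ae P, forall w, forall s, (s < m)%N -> Q s w}.
Proof.
elim: m => [|m IH] h; first by apply: aeW => w s.
have h1 := IH (fun s sm => h s (ltnW sm)).
apply: filterS2 h1 (h m (ltnSn m)) => w h1 h2 s.
rewrite ltnS leq_eqVlt => /orP[/eqP -> //|]; exact: h1.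
Qed.

Lemma ae_ord m (Q : 'I_m -> Omega -> Prop) :
  (forall s, {ae P, forall w, Q s w}) -> {ae P, forall w, forall s, Q s w}.
Proof.
move=> h.
have := @ae_nat (fun s w => forall hs : (s < m)%N, Q (Ordinal hs) w) m.
move=> /(_ _) h'.
have : {ae P, forall w, forall s, (s < m)%N -> forall hs : (s < m)%N, Q (Ordinal hs) w}.
  apply: h' => s sm; apply: filterS (h (Ordinal sm)) => w hw hs.
  by rewrite (_ : Ordinal hs = Ordinal sm) //; apply: val_inj.
apply: filterS => w hw [s hs]; exact: hw.
Qed.

Lemma meas_wrtE (f : Omega -> R) : meas_wrt measurable f <-> measurable_fun setT f.
Proof. split=> h. move=> _ B mB; rewrite setTI; exact: h.
move=> B mB; rewrite -(setTI (f @^-1` B)); exact: h. Qed.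

Lemma meas_wrtG (G : set (set Omega)) (f : Omega -> R) : sigma_algebra setT G ->
  meas_wrt G f <-> measurable_fun setT (f : g_sigma_algebraType G -> R).
Proof. move=> sG.
have E : G.-sigma.-measurable = G by exact: measurable_g_measurableTypeE.
split=> h. move=> _ B mB; rewrite setTI E; exact: h.
move=> B mB; have := h measurableT B mB; rewrite setTI E; exact. Qed.

Lemma meas_wrt_sub (G G' : set (set Omega)) (f : Omega -> R) : G `<=` G' -> meas_wrt G f -> meas_wrt G' f.
Proof. by move=> s h B mB; apply: s; exact: h. Qed.

Definition vmeas (X : Omega -> vec) := exists Y, vec_meas measurable Y /\ ase X Y.

Lemma vmeas_ase (X X' : Omega -> vec) : ase X X' -> vmeas X' -> vmeas X.
Proof. move=> h [Y [mY hY]]; exists Y; split => //; exact: ase_trans h hY. Qed.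

Lemma vmeas_cst (v : vec) : vmeas (fun=> v).
Proof.
exists (fun=> v); split; last exact: ase_refl.
by move=> i; apply/meas_wrtE; exact: measurable_cst.
Qed.

Lemma vmeasD (X Y : Omega -> vec) : vmeas X -> vmeas Y -> vmeas (fun w => X w + Y w).
Proof.
move=> [X' [mX hX]] [Y' [mY hY]]; exists (fun w => X' w + Y' w); split.
  move=> i; apply/meas_wrtE.
  have -> : (fun w => (X' w + Y' w) 0 i) = (fun w => X' w 0 i + Y' w 0 i).
    by apply: funext => w; rewrite mxE.
  by apply: measurable_funD; apply/meas_wrtE.
by apply: filterS2 hX hY => w -> ->.
Qed.

Lemma vmeasZ (c : R) (X : Omega -> vec) : vmeas X -> vmeas (fun w => c *: X w).
Proof.
move=> [X' [mX hX]]; exists (fun w => c *: X' w); split.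
  move=> i; apply/meas_wrtE.
  have -> : (fun w => (c *: X' w) 0 i) = (fun w => c * X' w 0 i).
    by apply: funext => w; rewrite mxE.
  by apply: measurable_funM; [exact: measurable_cst|apply/meas_wrtE].
by apply: filterS hX => w ->.
Qed.

Lemma vmeasN (X : Omega -> vec) : vmeas X -> vmeas (fun w => - X w).
Proof.
move=> h; apply: (vmeas_ase _ (vmeasZ (-1) h)).
by apply: ase_pw => w; rewrite scaleN1r.
Qed.

Lemma vmeasB (X Y : Omega -> vec) : vmeas X -> vmeas Y -> vmeas (fun w => X w - Y w).
Proof. by move=> hX hY; apply: vmeasD => //; exact: vmeasN. Qed.

Lemma vmeas_sum m (X : nat -> Omega -> vec) :
  (forall s, (s < m)%N -> vmeas (X s)) -> vmeas (fun w => \sum_(s < m) X s w).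
Proof.
elim: m => [|m IH] h.
  by apply: (vmeas_ase _ (vmeas_cst 0)); apply: ase_pw => w; rewrite big_ord0.
apply: (vmeas_ase _ (vmeasD (IH (fun s sm => h s (ltnW sm))) (h m (ltnSn m)))).
by apply: ase_pw => w; rewrite big_ord_recr.
Qed.

Lemma L0plusP (X : Omega -> vec) : L0plus P X <-> vmeas X /\ {ae P, forall w, vec_nonneg (X w)}.
Proof.
split.
  move=> [Y [mY [pY hY]]]; split; first by exists Y.
  by apply: filterS hY => w ->.
move=> [[Y [mY hY]] hp].
exists (fun w => \row_i Num.max (Y w 0 i) 0); split; [|split].
- move=> i; apply/meas_wrtE.
  have -> : (fun w => (\row_i Num.max (Y w 0 i) 0) 0 i) =
            (fun w => Num.max (Y w 0 i) 0) by apply: funext => w; rewrite mxE.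
  apply: measurable_maxr; [apply/meas_wrtE; exact: mY|exact: measurable_cst].
- by move=> w i; rewrite mxE le_max lexx orbT.
- apply: filterS2 hY hp => w hY hp; rewrite hY; apply/rowP => i.
  rewrite mxE; apply/esym/max_idPl; rewrite -hY; exact: hp.
Qed.

Lemma L0plus_ase (X X' : Omega -> vec) : ase X X' -> L0plus P X' -> L0plus P X.
Proof.
move=> h /L0plusP [m p]; apply/L0plusP; split; first exact: vmeas_ase m.
by apply: filterS2 h p => w ->.
Qed.

Lemma L0plus0 : L0plus P (fun=> 0 : vec).
Proof.
apply/L0plusP; split; first exact: vmeas_cst.
by apply: aeW => w i; rewrite mxE.
Qed.

End Main.

Section Model.
Context (R : realType) (d : measure_display) (Omega : measurableType d)
  (P : probability Omega R) (n : nat).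
Local Notation vec := 'rV[R]_n.
Local Notation mat := 'M[R]_n.
Local Notation ase := (ase P).
Context (T : nat) (A : set mat) (H : nat -> set (set Omega)).
Hypothesis hA : closed_convex_cone A.
Hypothesis hH : filtration T H.

Lemma mat_meas_H s (Y : Omega -> mat) : (s <= T)%N -> mat_meas (H s) Y ->
  mat_meas measurable Y.
Proof.
move=> sT h i j; apply: (meas_wrt_sub _ (h i j)) => B HB.
by case: hH => _ [h2 h3]; apply/h3/(h2 s T) => //.
Qed.

Lemma mat_meas_comb (G : set (set Omega)) (l b : R) (Y Y' : Omega -> mat) :
  sigma_algebra setT G -> mat_meas G Y -> mat_meas G Y' ->
  mat_meas G (fun w => l *: Y w + b *: Y' w).
Proof.
move=> sG hY hY' i j; apply/meas_wrtG => //.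
have -> : (fun w => (l *: Y w + b *: Y' w) i j) =
   (fun w => l * Y w i j + b * Y' w i j).
  by apply: funext => w; rewrite !mxE.
apply: measurable_funD; apply: measurable_funM; try exact: measurable_cst.
  by apply/meas_wrtG => //; exact: hY.
by apply/meas_wrtG => //; exact: hY'.
Qed.

Lemma A_comb (l b : R) a a' : 0 <= l -> 0 <= b -> A a -> A a' -> A (l *: a + b *: a').
Proof.
case: hA => _ [_ [hZ hD]] l0 b0 ha ha'; apply: hD; exact: hZ.
Qed.

Lemma cara (G : random_map R Omega n) t (eta : Omega -> mat) :
  in_bfF P T A G -> (t <= T)%N -> mat_meas measurable eta -> vmeas P (app G t eta).
Proof.
move=> hG tT he; have [hm hae] := hG t tT.
have [N [mN N0 sN]] := hae.
pose Y := fun w => if w \in N then 0 else G t w (eta w).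
exists Y; split; last first.
  exists N; split => // w /= hw; apply: contrapT => nN; apply: hw.
  by rewrite /app /Y; case: ifPn => //; rewrite inE.
have hc : forall w, ~ N w -> continuous (G t w).
  move=> w nN; apply: contrapT => nc; apply: nN; apply: sN => -[hc _]; exact: nc.
move=> i; apply/meas_wrtE; rewrite -(setUv N).
apply/measurable_funU => //; first exact: measurableC.
split.
  apply: (eq_measurable_fun (cst (0:R))); last exact: measurable_cst.
  by move=> w; rewrite inE /Y => wN; rewrite ifT ?inE // mxE.
apply: (eq_measurable_fun (fun w => G t w (eta w) 0 i)).
  by move=> w; rewrite inE /Y => wN; rewrite ifF //; apply/negP; rewrite inE.
apply: carath => //.
- by move=> a j; apply/meas_wrtE; exact: hm.
- by move=> j k; apply/meas_wrtE; exact: he.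
- exact: measurableC.
Qed.

Lemma norm_inN (F : random_map R Omega n) t (X : Omega -> vec) :
  inN P A H F t X -> exists Y, mat_meas (H t) Y /\ (forall w, A (Y w)) /\
    ase X (app F t Y).
Proof.
move=> [eta [[Y [mY [AY hY]]] hX]]; exists Y; split => //; split => //.
by apply: filterS2 hX hY => w -> /=; rewrite /app => ->.
Qed.

Lemma norm_proc (F : random_map R Omega n) xi : procN P T A H F xi ->
  exists Y : nat -> Omega -> mat, forall s, (s <= T)%N ->
    mat_meas (H s) (Y s) /\ (forall w, A (Y s w)) /\ ase (xi s) (app F s (Y s)).
Proof.
move=> hxi.
have h : forall s, exists Y : Omega -> mat, (s <= T)%N ->
    mat_meas (H s) Y /\ (forall w, A (Y w)) /\ ase (xi s) (app F s Y).
  move=> s; case: (leqP s T) => sT; last by exists (fun=> 0).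
  by have [Y hY] := norm_inN (hxi s sT); exists Y.
by have [Y hY] := choice h; exists Y.
Qed.

Lemma superadd (G : random_map R Omega n) s (Y Y' : Omega -> mat) (l b : R) :
  in_bfF P T A G -> (s <= T)%N -> (forall w, A (Y w)) -> (forall w, A (Y' w)) ->
  0 <= l -> 0 <= b ->
  {ae P, forall w, vec_nonneg (G s w (l *: Y w + b *: Y' w) -
       (l *: G s w (Y w) + b *: G s w (Y' w)))}.
Proof.
move=> hG sT hY hY' l0 b0; have [_ hae] := hG s sT.
by apply: filterS hae => w [_ [_ h]]; apply: h.
Qed.

Lemma comb (F : random_map R Omega n) t xi xi' (c c' : nat -> R) :
  in_bfF P T A F -> (t <= T)%N -> (forall s, 0 <= c s) -> (forall s, 0 <= c' s) ->
  procN P T A H F xi -> procN P T A H F xi' ->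
  inAt P T A H F t (fun w => \sum_(s < t.+1) (c s *: xi s w + c' s *: xi' s w)).
Proof.
move=> hF tT hc hc' hxi hxi'.
have [Y hY] := norm_proc hxi; have [Y' hY'] := norm_proc hxi'.
pose th s w := c s *: Y s w + c' s *: Y' s w.
pose ze s := app F s (th s).
pose X := fun w => \sum_(s < t.+1) (c s *: xi s w + c' s *: xi' s w).
have sT : forall s : 'I_t.+1, (s <= T)%N.
  by move=> s; have := ltn_ord s; rewrite ltnS => h; exact: leq_trans h tT.
exists ze, (fun w => V ze t w - X w); split; [|split].
- move=> s hs; exists (th s); split; last exact: ase_refl.
  have [m1 [A1 _]] := hY s hs; have [m2 [A2 _]] := hY' s hs.
  exists (th s); split; [|split; [|exact: ase_refl]].
    by apply: mat_meas_comb => //; case: hH => h _; exact: h.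
  by move=> w; apply: A_comb.
- apply/L0plusP; split.
    apply: vmeasB.
      apply: (@vmeas_sum _ _ _ P n t.+1 ze) => s sm; have sT' : (s <= T)%N.
        by move: sm; rewrite ltnS => h; exact: leq_trans h tT.
      have [m1 [A1 _]] := hY s sT'; have [m2 [A2 _]] := hY' s sT'.
      apply: cara => //; apply: (mat_meas_H sT').
      by apply: mat_meas_comb => //; case: hH => h _; exact: h.
    apply: (@vmeas_sum _ _ _ P n t.+1 (fun s w => c s *: xi s w + c' s *: xi' s w)) => s sm.
      have sT' : (s <= T)%N.
        by move: sm; rewrite ltnS => h; exact: leq_trans h tT.
      have [m1 [A1 e1]] := hY s sT'; have [m2 [A2 e2]] := hY' s sT'.
      apply: vmeasD; apply: vmeasZ.
        by apply: (vmeas_ase e1); apply: cara => //; exact: (mat_meas_H sT').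
      by apply: (vmeas_ase e2); apply: cara => //; exact: (mat_meas_H sT').
  have hs : {ae P, forall w, forall s, (s < t.+1)%N ->
     vec_nonneg (ze s w - (c s *: xi s w + c' s *: xi' s w))}.
    apply: ae_nat => s sm; have sT' : (s <= T)%N.
      by move: sm; rewrite ltnS => h; exact: leq_trans h tT.
    have [m1 [A1 e1]] := hY s sT'; have [m2 [A2 e2]] := hY' s sT'.
    have := superadd hF sT' A1 A2 (hc s) (hc' s).
    apply: filterS3 e1 e2 => w h1 h2 h3.
    by rewrite h1 h2.
  apply: filterS hs => w hs i.
  rewrite /V /X -sumrB summxE; apply: sumr_ge0 => s _; exact: hs s (ltn_ord s) i.
- by apply: ase_pw => w; rewrite subKr.
Qed.
End Model.

Lemma sel_sum (R : realType) (n : nat) t (a b : nat -> 'rV[R]_n) (ca cb : R) :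
  \sum_(s < t.+1) ((if (s < t)%N then 1 else ca) *: a s +
                   (if (s < t)%N then 1 else cb) *: b s) =
  \sum_(s < t.+1) a s + \sum_(s < t.+1) b s - (1 - ca) *: a t - (1 - cb) *: b t.
Proof.
rewrite !big_ord_recr /= ltnn.
rewrite (eq_bigr (fun i : 'I_t => a i + b i)); last first.
  by move=> i _; rewrite ltn_ord !scale1r.
rewrite big_split /=; apply/rowP => j; rewrite !(mxE, summxE); ring.
Qed.

Section CaseII.
Context (R : realType) (d : measure_display) (Omega : measurableType d)
  (P : probability Omega R) (n : nat).
Local Notation vec := 'rV[R]_n.
Local Notation mat := 'M[R]_n.
Local Notation ase := (ase P).
Context (T : nat) (A : set mat) (H : nat -> set (set Omega)).
Hypothesis hA : closed_convex_cone A.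
Hypothesis hH : filtration T H.
Variable F : random_map R Omega n.
Hypothesis hF : in_bfF P T A F.
Hypothesis hNAs : NAs P T A H F.
Hypothesis hEF : EF P T A H F.

Lemma comb_eq t xi xi' (c c' : nat -> R) (X : Omega -> vec) :
  (t <= T)%N -> (forall s, 0 <= c s) -> (forall s, 0 <= c' s) ->
  procN P T A H F xi -> procN P T A H F xi' ->
  (forall w, \sum_(s < t.+1) (c s *: xi s w + c' s *: xi' s w) = X w) ->
  inAt P T A H F t X.
Proof.
move=> tT hc hc' hxi hxi' e.
have [z [r [h1 [h2 h3]]]] := comb hA hH hF tT hc hc' hxi hxi'.
exists z, r; split => //; split => //.
by apply: filterS h3 => w <-; rewrite e.
Qed.

Lemma key t (X : Omega -> vec) (xi0 : Omega -> vec) (r : Omega -> vec) :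
  (t <= T)%N -> inAt P T A H F t X -> inN P A H F t xi0 -> L0plus P r ->
  ase X (fun w => - xi0 w + r w) -> ase X (fun=> 0).
Proof.
move=> tT hX h0 hr e; apply/(hEF tT X).
by apply: (hNAs tT hX); exists xi0, r.
Qed.

Lemma step t xi xi' : (t <= T)%N -> procN P T A H F xi -> procN P T A H F xi' ->
  L0plus P (fun w => V xi t w + V xi' t w) ->
  [/\ ase (xi t) (fun=> 0), ase (xi' t) (fun=> 0) &
      ase (fun w => V xi t w + V xi' t w) (fun=> 0)].
Proof.
move=> tT hxi hxi' hS.
set S := fun w => V xi t w + V xi' t w.
have hc (ca : R) : 0 <= ca -> forall s, 0 <= (if (s < t)%N then 1 else ca).
  by move=> ca0 s; case: ifP.
have eq1 : forall w, \sum_(s < t.+1) ((if (s < t)%N then 1 else 1) *: xi s w +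
                   (if (s < t)%N then 1 else 0) *: xi' s w) = S w - xi' t w.
  move=> w; rewrite (sel_sum t (fun s => xi s w) (fun s => xi' s w)) /=.
  by apply/rowP => j; rewrite /S /V !(mxE, summxE); ring.
have e1 : ase (fun w => S w - xi' t w) (fun=> 0).
  apply: (key tT (comb_eq tT (hc 1 ler01) (hc 0 (lexx 0)) hxi hxi' eq1)
     (hxi' t tT) hS).
  by apply: ase_pw => w; rewrite addrC.
have eq2 : forall w, \sum_(s < t.+1) ((if (s < t)%N then 1 else 0) *: xi s w +
                   (if (s < t)%N then 1 else 1) *: xi' s w) = S w - xi t w.
  move=> w; rewrite (sel_sum t (fun s => xi s w) (fun s => xi' s w)) /=.
  by apply/rowP => j; rewrite /S /V !(mxE, summxE); ring.
have e2 : ase (fun w => S w - xi t w) (fun=> 0).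
  apply: (key tT (comb_eq tT (hc 0 (lexx 0)) (hc 1 ler01) hxi hxi' eq2)
     (hxi t tT) hS).
  by apply: ase_pw => w; rewrite addrC.
have [Y hY] := norm_proc hxi; have [Y' hY'] := norm_proc hxi'.
have [m1 [A1 E1]] := hY t tT; have [m2 [A2 E2]] := hY' t tT.
pose th := fun w => 1 *: Y t w + 1 *: Y' t w.
pose xi0 := app F t th.
have eq3 : forall w, \sum_(s < t.+1) ((if (s < t)%N then 1 else 0) *: xi s w +
                   (if (s < t)%N then 1 else 0) *: xi' s w) = S w - xi t w - xi' t w.
  move=> w; rewrite (sel_sum t (fun s => xi s w) (fun s => xi' s w)) /=.
  by apply/rowP => j; rewrite /S /V !(mxE, summxE); ring.
have e3 : ase (fun w => S w - xi t w - xi' t w) (fun=> 0).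
  apply: (key (xi0 := xi0) (r := fun w => S w + xi0 w - xi t w - xi' t w) tT
     (comb_eq tT (hc 0 (lexx 0)) (hc 0 (lexx 0)) hxi hxi' eq3)).
  - exists th; split; last exact: ase_refl.
    exists th; split; [|split; [|exact: ase_refl]].
      by apply: mat_meas_comb => //; case: hH => h _; exact: h.
    by move=> w; apply: A_comb.
  - have mth : mat_meas measurable th.
      apply: (mat_meas_H hH tT).
      by apply: mat_meas_comb => //; case: hH => h _; exact: h.
    apply/L0plusP; split.
      have [hSm _] := (L0plusP _ _).1 hS.
      have v0 : vmeas P xi0 by exact: (cara hF tT mth).
      have v1 : vmeas P (xi t).
        by apply: (vmeas_ase E1); apply: (cara hF tT); exact: (mat_meas_H hH tT).
      have v2 : vmeas P (xi' t).
        by apply: (vmeas_ase E2); apply: (cara hF tT); exact: (mat_meas_H hH tT).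
      exact: (vmeasB (vmeasB (vmeasD hSm v0) v1) v2).
    have [_ hSp] := (L0plusP _ _).1 hS.
    have := superadd hF tT A1 A2 ler01 ler01.
    move=> h; have := ae_conj hSp h.
    apply: filterS3 E1 E2 => w h1 h2 [h3 h4] i.
    have := h4 i; have := h3 i; rewrite /xi0 /app h1 h2 /th !scale1r.
    rewrite !mxE => ha hb; lra.
  - apply: ase_pw => w.
    by apply/rowP => j; rewrite !mxE; ring.
have ent (u v : vec) j : u = v -> u 0 j = v 0 j by move=> ->.
split.
- apply: filterS3 e1 e2 e3 => w h1 h2 h3; apply/rowP => j.
  move: (ent _ _ j h1) (ent _ _ j h2) (ent _ _ j h3); rewrite !mxE; lra.
- apply: filterS3 e1 e2 e3 => w h1 h2 h3; apply/rowP => j.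
  move: (ent _ _ j h1) (ent _ _ j h2) (ent _ _ j h3); rewrite !mxE; lra.
- apply: filterS3 e1 e2 e3 => w h1 h2 h3; apply/rowP => j.
  move: (ent _ _ j h1) (ent _ _ j h2) (ent _ _ j h3); rewrite /S !mxE; lra.
Qed.

Lemma caseII : KP P T A H F.
Proof.
move=> xi xi' hxi hxi' hS.
have main : forall t, (t <= T)%N -> L0plus P (fun w => V xi t w + V xi' t w) ->
    forall s, (s <= t)%N -> ase (xi s) (fun=> 0) /\ ase (xi' s) (fun=> 0).
  elim=> [|t IH] tT hSt s st.
    have [a b _] := step tT hxi hxi' hSt.
    by move: st; rewrite leqn0 => /eqP ->.
  have [a b c] := step tT hxi hxi' hSt.
  move: st; rewrite leq_eqVlt => /orP[/eqP -> //|]; rewrite ltnS => st.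
  apply: IH => //; first exact: ltnW.
  apply: (L0plus_ase (X' := fun=> 0)); last exact: L0plus0.
  apply: filterS3 a b c => w h1 h2 h3.
  have e : forall u : nat -> Omega -> vec, V u t.+1 w = V u t w + u t.+1 w.
    by move=> u; rewrite /V big_ord_recr.
  by move: h3; rewrite !e h1 h2 !addr0.
split.
- move=> t tT; apply/(hEF tT); exact: (main T (leqnn T) hS t tT).1.
- by have [_ _ c] := step (leqnn T) hxi hxi' hS.
Qed.
End CaseII.

Section CaseI.
Context (R : realType) (d : measure_display) (Omega : measurableType d)
  (P : probability Omega R) (n : nat).
Local Notation vec := 'rV[R]_n.
Local Notation mat := 'M[R]_n.
Local Notation ase := (ase P).
Context (T : nat) (A : set mat) (H : nat -> set (set Omega)).
Hypothesis hA : closed_convex_cone A.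
Hypothesis hH : filtration T H.
Variable F : random_map R Omega n.
Hypothesis hF : in_bfF P T A F.
Hypothesis hcomp : measure_is_complete P.

Lemma inN0_ase t (X X' : Omega -> vec) : ase X X' -> inN0 P A H F t X' -> inN0 P A H F t X.
Proof.
move=> e [[eta [h1 h2]] [eta' [h1' h2']]]; split.
  by exists eta; split => //; exact: ase_trans e h2.
exists eta'; split => //; apply: ase_trans h2'.
by apply: filterS e => w ->.
Qed.

Lemma caseI : NAr P T A H F -> KP P T A H F.
Proof.
move=> [G [hG [hcond hNAw]]] xi xi' hxi hxi' hS.
have [Y hY] := norm_proc hxi; have [Y' hY'] := norm_proc hxi'.
have adY : adaptedA P T A H Y.
  move=> t tT; have [m1 [A1 _]] := hY t tT; exists (Y t); split => //; split => //.
  exact: ase_refl.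
have adY' : adaptedA P T A H Y'.
  move=> t tT; have [m1 [A1 _]] := hY' t tT; exists (Y' t); split => //; split => //.
  exact: ase_refl.
pose th s w := 1 *: Y s w + 1 *: Y' s w.
pose ze s := app G s (th s).
have pze : procN P T A H G ze.
  move=> s hs; exists (th s); split; last exact: ase_refl.
  have [m1 [A1 _]] := hY s hs; have [m2 [A2 _]] := hY' s hs.
  exists (th s); split; [|split; [|exact: ase_refl]].
    by apply: mat_meas_comb => //; case: hH => h _; exact: h.
  by move=> w; apply: A_comb.
pose X := V ze T.
have hX : inAt P T A H G T X.
  exists ze, (fun=> 0); split => //; split; first exact: L0plus0.
  by apply: ase_pw => w; rewrite subr0.
have sT : forall s, (s < T.+1)%N -> (s <= T)%N by [].
have hall : {ae P, forall w, forall s, (s < T.+1)%N ->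
   [/\ vec_nonneg (ze s w - (1 *: G s w (Y s w) + 1 *: G s w (Y' s w))),
       (forall i, F s w (Y s w) 0 i <= G s w (Y s w) 0 i),
       (forall i, F s w (Y' s w) 0 i <= G s w (Y' s w) 0 i),
       xi s w = F s w (Y s w) & xi' s w = F s w (Y' s w)]}.
  apply: ae_nat => s sm; have sT' := sT s sm.
  have [m1 [A1 e1]] := hY s sT'; have [m2 [A2 e2]] := hY' s sT'.
  have g := superadd hG sT' A1 A2 ler01 ler01.
  have c1 := ae_ord (fun i => (hcond Y adY s sT').1 i).
  have c2 := ae_ord (fun i => (hcond Y' adY' s sT').1 i).
  have := ae_conj (ae_conj g c1) (ae_conj c2 (ae_conj e1 e2)).
  by apply: filterS => w [[h1 h2] [h3 [h4 h5]]]; split.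
pose S := fun w => V xi T w + V xi' T w.
pose sm w i s := (ze s w - (1 *: G s w (Y s w) + 1 *: G s w (Y' s w))) 0 i +
      (G s w (Y s w) 0 i - F s w (Y s w) 0 i) +
      (G s w (Y' s w) 0 i - F s w (Y' s w) 0 i).
have keyeq : forall w, (forall s, (s < T.+1)%N -> xi s w = F s w (Y s w) /\
     xi' s w = F s w (Y' s w)) -> forall i,
    X w 0 i - S w 0 i = \sum_(s < T.+1) sm w i s.
  move=> w hw i.
  have -> : \sum_(s < T.+1) sm w i s =
      \sum_(s < T.+1) (ze s w 0 i - xi s w 0 i - xi' s w 0 i).
    apply: eq_bigr => s _; have [-> ->] := hw s (ltn_ord s).
    by rewrite /sm !mxE; ring.
  by rewrite !sumrB /X /S /V !(mxE, summxE); ring.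
have smge0 : forall w, (forall s, (s < T.+1)%N ->
   [/\ vec_nonneg (ze s w - (1 *: G s w (Y s w) + 1 *: G s w (Y' s w))),
       (forall i, F s w (Y s w) 0 i <= G s w (Y s w) 0 i),
       (forall i, F s w (Y' s w) 0 i <= G s w (Y' s w) 0 i),
       xi s w = F s w (Y s w) & xi' s w = F s w (Y' s w)]) ->
   forall i s, (s < T.+1)%N -> 0 <= sm w i s.
  move=> w hw i s hs; have [h1 h2 h3 _ _] := hw s hs.
  have := h1 i; have := h2 i; have := h3 i; rewrite /sm; lra.
have [_ hSp] := (L0plusP _ _).1 hS.
have hXp : L0plus P X.
  apply/L0plusP; split.
    apply: vmeas_sum => s hs; apply: cara hG (sT s hs) _.
    have [m1 [A1 _]] := hY s (sT s hs); have [m2 [A2 _]] := hY' s (sT s hs).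
    apply: (mat_meas_H hH (sT s hs)).
    by apply: mat_meas_comb => //; case: hH => h _; exact: h.
  apply: filterS2 hall hSp => w hw hs i.
  have e := keyeq w (fun s hs => let: And5 _ _ _ a b := hw s hs in conj a b) i.
  have : 0 <= \sum_(s < T.+1) sm w i s.
    by apply: sumr_ge0 => s _; exact: smge0 w hw i s (ltn_ord s).
  have := hs i; rewrite /S in e; lra.
have hX0 : ase X (fun=> 0) by apply/(hNAw X); split.
have hfin : {ae P, forall w, (forall i, S w 0 i = 0) /\ forall s, (s < T.+1)%N ->
     forall i, G s w (Y s w) 0 i = F s w (Y s w) 0 i}.
  apply: filterS3 hall hX0 hSp => w hw hx hs.
  have e := keyeq w (fun s hs => let: And5 _ _ _ a b := hw s hs in conj a b).
  have hsum : forall i, S w 0 i = 0 /\ \sum_(s < T.+1) sm w i s = 0.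
    move=> i; have := e i; rewrite hx mxE.
    have : 0 <= \sum_(s < T.+1) sm w i s.
      by apply: sumr_ge0 => s _; exact: smge0 w hw i s (ltn_ord s).
    have := hs i; rewrite /S; lra.
  split; first by move=> i; case: (hsum i).
  move=> s hs' i; have [_ h0] := hsum i.
  have {}h0 := psumr_eq0P (fun (s : 'I_T.+1) _ => smge0 w hw i s (ltn_ord s)) h0.
  have := h0 (Ordinal hs') isT; have [h1 h2 h3 _ _] := hw s hs'.
  have := h1 i; have := h2 i; have := h3 i; rewrite /sm /=; lra.
split.
- move=> t tT; apply: contrapT => hn.
  have [_ [_ Et]] := hY t tT.
  have hn' : ~ inN0 P A H F t (app F t (Y t)).
    by move=> h; apply: hn; exact: inN0_ase Et h.
  have := (hcond Y adY t tT).2 hn'.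
  set B := [set w | _].
  have nB : P.-negligible B.
    apply: negligibleS hfin => w /= [k hk] [_ h].
    by move: hk; rewrite h ?ltxx.
  have [N [mN N0 BN]] := nB.
  have : (P B <= P N)%E by apply: le_measure; rewrite ?inE //; exact: hcomp.
  by rewrite N0 => h1 h2; have := lt_le_trans h2 h1; rewrite ltxx.
- by apply: filterS hfin => w [h _]; apply/rowP => i; rewrite h mxE.
Qed.
End CaseI.

Unset Implicit Arguments.

Theorem mainTheorem6 (R : realType) (d : measure_display) (Omega : measurableType d)
  (P : probability Omega R) (n : nat) (T : nat)
  (A : set 'M[R]_n) (H : nat -> set (set Omega)) (F : random_map R Omega n) :
  (0 < n)%N ->
  measure_is_complete P ->
  closed_convex_cone A ->
  filtration T H ->
  in_bfF P T A F ->
  (NAr P T A H F \/ (NAs P T A H F /\ EF P T A H F)) ->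
  KP P T A H F.
Proof.
move=> _ hc hA hH hF [h|[h1 h2]].
- exact: (caseI hA hH hc h).
- exact: (caseII hA hH hF h1 h2).
Qed.
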